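(* Let $\mathcal{A}$ be an $s\ell$-enriched category, $\mathcal{B}$ an $s\ell$-generating collection of objects of $\mathcal{A}$ (viewed as a full subcategory), $T,T':\mathcal{A}\to s\ell_0$ two $s\ell$-functors and $L$ a sup-lattice. If $\lambda_C:TC\otimes T'C\to L$ ($C\in\mathcal{B}$) is a $\lozenge$-cone defined on $\mathcal{B}$, then there are unique $\lambda_X:TX\otimes T'X\to L$ for all objects $X\in\mathcal{A}$ forming a $\lozenge$-cone on $\mathcal{A}$ extending $\lambda$.
   Context: Work over a base topos $\mathcal{S}$; $s\ell$ is the category of sup-lattices and $s\ell_0$ its full subcategory of power objects $\Omega^X$ (isomorphic to the category of relations of $\mathcal{S}$; each $\Omega^X$ is self-dual, and for a linear map $g$ between such objects $g^\wedge$ denotes its dual, corresponding to the opposite relation). $\mathcal{B}$ is $s\ell$-generating if for every $X\in\mathcal{A}$, $1_X=\bigvee\{f\circ r: r,f\text{ arrows of }\mathcal{A},\ \mathrm{cod}(r)=\mathrm{dom}(f)\in\mathcal{B},\ f\circ r\le1_X\}$. A family $\lambda_X:TX\otimes T'X\to L$ is a $\lozenge$-cone (on $\mathcal{A}$, resp. on $\mathcal{B}$) if for every arrow $f:X\to Y$ (of $\mathcal{A}$, resp. between objects of $\mathcal{B}$), $\lambda_X\circ(TX\otimes T'(f)^\wedge)=\lambda_Y\circ(T(f)\otimes T'Y)$ as maps $TX\otimes T'Y\to L$; internally, for $c\in TX$, $y'\in T'Y$: $\lambda_Y(T(f)c\otimes y')=\bigvee_{x'\in T'X}[\![T'(f)x'=y']\!]\cdot\lambda_X(c\otimes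 x')$. *)

(* Defs.v *)
(* The base topos S is modelled by Rocq's own type theory
   (types = objects of S, Prop = Omega, with propositional/functional
   extensionality). *)
From Stdlib Require Import PropExtensionality FunctionalExtensionality.
Set Implicit Arguments.
Unset Strict Implicit.

Record SupLattice := {
  sl_car :> Type;
  sl_le : sl_car -> sl_car -> Prop;
  sl_join : (sl_car -> Prop) -> sl_car;
  sl_le_refl : forall x, sl_le x x;
  sl_le_trans : forall x y z, sl_le x y -> sl_le y z -> sl_le x z;
  sl_le_antisym : forall x y, sl_le x y -> sl_le y x -> x = y;
  sl_join_ub : forall (S : sl_car -> Prop) x, S x -> sl_le x (sl_join S);
  sl_join_least : forall (S : sl_car -> Prop) u,
      (forall x, S x -> sl_le x u) -> sl_le (sl_join S) u
}.

Definition image (A B : Type) (f : A -> B) (S : A -> Prop) : B -> Prop :=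
  fun y => exists x, S x /\ y = f x.

Definition is_linear (L M : SupLattice) (f : L -> M) : Prop :=
  forall S : L -> Prop, f (sl_join S) = sl_join (image f S).

(* linear maps  L1 (x) L2 -> M  are represented, via the universal property
   of the tensor product, by bimorphisms (maps linear in each variable). *)
Definition is_bimorphism (L1 L2 M : SupLattice) (g : L1 -> L2 -> M) : Prop :=
  (forall b, is_linear (L:=L1) (M:=M) (fun a => g a b)) /\
  (forall a, is_linear (L:=L2) (M:=M) (g a)).

Definition Pow (X : Type) : Type := X -> Prop.

Lemma pow_antisym (X : Type) (A B : Pow X) :
  (forall x, A x -> B x) -> (forall x, B x -> A x) -> A = B.
Proof.
  intros H1 H2; apply functional_extensionality; intro x;
  apply propositional_extensionality; split; auto.
Qed.

Definition PowSL (X : Type) : SupLattice.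
Proof.
  refine {| sl_car := Pow X;
            sl_le := fun A B => forall x, A x -> B x;
            sl_join := fun F => fun x => exists A, F A /\ A x |}.
  - auto.
  - auto.
  - apply pow_antisym.
  - intros S A HS x Hx; exists A; auto.
  - intros S u H x [A [HA Hx]]; exact (H A HA x Hx).
Defined.

Definition sing (X : Type) (x : X) : Pow X := fun z => z = x.

(* dual g^ of a linear map g : Omega^X -> Omega^Y: the linear map
   Omega^Y -> Omega^X of the opposite relation, where g corresponds to the
   relation R x y := y \in g {x}. *)
Definition dual (X Y : Type) (g : Pow X -> Pow Y) : Pow Y -> Pow X :=
  fun S x => exists y, S y /\ g (sing x) y.

Record SlCat := {
  ob : Type;
  hom : ob -> ob -> SupLattice;
  comp : forall X Y Z, hom Y Z -> hom X Y -> hom X Z;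
  idm : forall X, hom X X;
  comp_assoc : forall X Y Z W (h : hom Z W) (g : hom Y Z) (f : hom X Y),
      comp h (comp g f) = comp (comp h g) f;
  comp_id_l : forall X Y (f : hom X Y), comp (idm Y) f = f;
  comp_id_r : forall X Y (f : hom X Y), comp f (idm X) = f;
  comp_bimorphism : forall X Y Z,
      is_bimorphism (L1:=hom Y Z) (L2:=hom X Y) (M:=hom X Z) (@comp X Y Z)
}.

Arguments comp {_ X Y Z} _ _.
Arguments idm {_} X.
Arguments hom : clear implicits.

Definition sl_generating (A : SlCat) (B : ob A -> Prop) : Prop :=
  forall X : ob A,
    idm X = sl_join (fun h : hom A X X =>
      exists (C : ob A) (r : hom A X C) (f : hom A C X),
        B C /\ h = comp f r /\ sl_le (comp f r) (idm X)).

Record SlFun (A : SlCat) := {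
  fob : ob A -> Type;                        (* T X = Omega^(fob X) *)
  fmap : forall X Y, hom A X Y -> Pow (fob X) -> Pow (fob Y);
  fmap_linear : forall X Y (f : hom A X Y),
      is_linear (L:=PowSL (fob X)) (M:=PowSL (fob Y)) (fmap f);
  fmap_comp : forall X Y Z (g : hom A Y Z) (f : hom A X Y),
      fmap (comp g f) = fun c => fmap g (fmap f c);
  fmap_id : forall X, fmap (idm X) = fun c => c;
  (* enrichment: T_{X,Y} : hom(X,Y) -> sl_0(TX,TY) preserves sups
     (sups of linear maps are computed pointwise) *)
  fmap_sup : forall X Y (S : hom A X Y -> Prop),
      fmap (sl_join S) = fun c y => exists f, S f /\ fmap f c y
}.

Arguments fob {_} _ _.
Arguments fmap {_} _ {X Y} _ _ _.

(* A family lam_X : TX (x) T'X -> L (X ranging over objects satisfying P)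
   is a diamond-cone on P: for every f : X -> Y between P-objects,
   lam_X o (TX (x) T'(f)^) = lam_Y o (T(f) (x) T'Y) on TX (x) T'Y
   (checked on generators c (x) y'). *)
Definition diamond_cone (A : SlCat) (T T' : SlFun A) (L : SupLattice)
  (P : ob A -> Prop)
  (lam : forall X : ob A, Pow (fob T X) -> Pow (fob T' X) -> L) : Prop :=
  forall (X Y : ob A) (f : hom A X Y), P X -> P Y ->
    forall (c : Pow (fob T X)) (y' : Pow (fob T' Y)),
      lam X c (dual (fmap T' f) y') = lam Y (fmap T f c) y'.

Definition tensor_arrows (A : SlCat) (T T' : SlFun A) (L : SupLattice)
  (P : ob A -> Prop)
  (lam : forall X : ob A, Pow (fob T X) -> Pow (fob T' X) -> L) : Prop :=
  forall X, P X ->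
    is_bimorphism (L1:=PowSL (fob T X)) (L2:=PowSL (fob T' X)) (M:=L) (lam X).

Arguments diamond_cone {A} T T' L P lam.
Arguments tensor_arrows {A} T T' L P lam.

(* Main.v *)
Require Import Defs.
From Stdlib Require Import PropExtensionality FunctionalExtensionality.

Definition J {L : SupLattice} {I : Type} (P : I -> Prop) (F : I -> L) : L :=
  @sl_join L (image F P).

Lemma J_ub {L : SupLattice} {I} (P : I -> Prop) (F : I -> L) i :
  P i -> sl_le (F i) (J P F).
Proof. intro H. apply sl_join_ub. exists i; auto. Qed.

Lemma J_least {L : SupLattice} {I} (P : I -> Prop) (F : I -> L) u :
  (forall i, P i -> sl_le (F i) u) -> sl_le (J P F) u.
Proof. intro H. apply sl_join_least. intros x [i [Hi ->]]. auto. Qed.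

Lemma J_ext {L : SupLattice} {I} (P : I -> Prop) (F G : I -> L) :
  (forall i, P i -> F i = G i) -> J P F = J P G.
Proof.
  intro H. apply sl_le_antisym; apply J_least; intros i Hi.
  - rewrite H by auto. apply J_ub; auto.
  - rewrite <- H by auto. apply J_ub; auto.
Qed.

Lemma J_swap {L : SupLattice} {I K} (P : I -> Prop) (Q : K -> Prop) (F : I -> K -> L) :
  J P (fun i => J Q (F i)) = J Q (fun j => J P (fun i => F i j)).
Proof.
  apply sl_le_antisym; apply J_least; intros i Hi; apply J_least; intros j Hj.
  - apply sl_le_trans with (J P (fun i => F i j)).
    + apply (J_ub P (fun i => F i j)); auto.
    + apply (J_ub Q (fun j => J P (fun i => F i j))); auto.
  - apply sl_le_trans with (J Q (F j)).
    + apply (J_ub Q (F j)); auto.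
    + apply (J_ub P (fun i => J Q (F i))); auto.
Qed.

Lemma lin_J {L M : SupLattice} (f : L -> M) {I} (P : I -> Prop) (F : I -> L) :
  is_linear f -> f (J P F) = J P (fun i => f (F i)).
Proof.
  intro H. unfold J. rewrite H. f_equal. apply functional_extensionality; intro y.
  apply propositional_extensionality. unfold image. split.
  - intros [x [[i [Hi ->]] ->]]. eauto.
  - intros [i [Hi ->]]. exists (F i). split; eauto.
Qed.

Lemma sl_join_J {L : SupLattice} (S : L -> Prop) : sl_join S = J S (fun x => x).
Proof.
  unfold J. f_equal. apply functional_extensionality; intro y.
  apply propositional_extensionality. unfold image. split.
  - intros H. exists y; auto.
  - intros [x [Hx ->]]; auto.
Qed.

Lemma PowJ (X : Type) {I} (P : I -> Prop) (F : I -> Pow X) :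
  @J (PowSL X) I P F = fun x => exists i, P i /\ F i x.
Proof.
  apply pow_antisym; unfold J; simpl; intros x.
  - intros [A [[i [Hi ->]] Hx]]. eauto.
  - intros [i [Hi Hx]]. exists (F i). split; [exists i; auto | auto].
Qed.

Lemma lin_pt (X Y : Type) (g : Pow X -> Pow Y) :
  is_linear (L:=PowSL X) (M:=PowSL Y) g ->
  forall A, g A = fun y => exists x, A x /\ g (sing x) y.
Proof.
  intros Hg A.
  assert (HA : A = @J (PowSL X) X A (@sing X)).
  { rewrite PowJ. apply pow_antisym; intros x.
    - intros Hx. exists x. split; auto. reflexivity.
    - intros [i [Hi Hx]]. unfold sing in Hx. subst. auto. }
  rewrite HA at 1. rewrite (lin_J (L:=PowSL X) (M:=PowSL Y) g _ _ Hg). rewrite PowJ. reflexivity.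
Qed.

Lemma dual_comp (X Y Z : Type) (g1 : Pow X -> Pow Y) (g2 : Pow Y -> Pow Z) S :
  is_linear (L:=PowSL Y) (M:=PowSL Z) g2 ->
  dual (fun c => g2 (g1 c)) S = dual g1 (dual g2 S).
Proof.
  intros H. apply pow_antisym; unfold dual; intros x.
  - intros [z [Hz Hg]]. rewrite (lin_pt _ _ g2 H) in Hg. destruct Hg as [y [Hy Hyz]].
    exists y. split; eauto.
  - intros [y [[z [Hz Hyz]] Hy]]. exists z. split; auto.
    rewrite (lin_pt _ _ g2 H). eauto.
Qed.

Lemma dual_linear (X Y : Type) (g : Pow X -> Pow Y) :
  is_linear (L:=PowSL Y) (M:=PowSL X) (dual g).
Proof.
  intro S. apply pow_antisym; simpl; unfold dual, image; intros x.
  - intros [y [[A [HA Hy]] Hg]]. exists (fun x => exists y, A y /\ g (sing x) y).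
    split; [exists A; auto | eauto].
  - intros [D [[A [HA ->]] [y [Hy Hg]]]]. exists y. split; eauto.
Qed.

Lemma fmap_J {A : SlCat} (T : SlFun A) {X Y : ob A} {I} (P : I -> Prop)
  (F : I -> hom A X Y) c :
  fmap T (J P F) c = @J (PowSL _) _ P (fun i => fmap T (F i) c).
Proof.
  unfold J at 1. rewrite fmap_sup. rewrite PowJ.
  apply pow_antisym; unfold image; intros y.
  - intros [f [[i [Hi ->]] Hf]]. eauto.
  - intros [i [Hi Hf]]. exists (F i). split; eauto.
Qed.

Lemma dual_fmap_J {A : SlCat} (T : SlFun A) {X Y : ob A} {I} (P : I -> Prop)
  (F : I -> hom A X Y) y :
  dual (fmap T (J P F)) y = @J (PowSL _) _ P (fun i => dual (fmap T (F i)) y).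
Proof.
  unfold J at 1. rewrite fmap_sup. rewrite PowJ.
  apply pow_antisym; unfold image, dual; intros x.
  - intros [z [Hz [f [[i [Hi ->]] Hf]]]]. eauto.
  - intros [i [Hi [z [Hz Hf]]]]. exists z. split; auto. exists (F i). split; eauto.
Qed.

Lemma comp_J_l {A : SlCat} {X Y Z : ob A} {I} (P : I -> Prop)
  (F : I -> hom A Y Z) (k : hom A X Y) :
  comp (J P F) k = J P (fun i => comp (F i) k).
Proof.
  exact (lin_J (fun a => comp a k) P F (proj1 (comp_bimorphism X Y Z) k)).
Qed.

Lemma dual_comp' {A : SlCat} (T : SlFun A) {X Y Z : ob A} (g : hom A Y Z) (f : hom A X Y) y :
  dual (fmap T (comp g f)) y = dual (fmap T f) (dual (fmap T g) y).
Proof.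
  rewrite fmap_comp. apply dual_comp. apply fmap_linear.
Qed.

Record gen (A : SlCat) (X : ob A) := mkgen { gC : ob A; gr : hom A X gC; gf : hom A gC X }.
Arguments gC {A X}.
Arguments gr {A X}.
Arguments gf {A X}.

Definition Pg (A : SlCat) (B : ob A -> Prop) (X : ob A) (i : gen A X) : Prop :=
  B (gC i) /\ sl_le (comp (gf i) (gr i)) (idm X).

Lemma idm_J (A : SlCat) (B : ob A -> Prop) (HB : sl_generating B) X :
  idm X = J (Pg A B X) (fun i => comp (gf i) (gr i)).
Proof.
  rewrite (HB X). unfold J. f_equal.
  apply functional_extensionality; intro h; apply propositional_extensionality.
  unfold image. split.
  - intros [C [r [f [HC [-> Hle]]]]]. exists (mkgen A X C r f). split; [split; auto | reflexivity].
  - intros [[C r f] [[HC Hle] ->]]. exists C, r, f. simpl in *. auto.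
Qed.

Lemma ident_T (A : SlCat) (B : ob A -> Prop) (HB : sl_generating B) (T : SlFun A) X c :
  c = @J (PowSL _) _ (Pg A B X) (fun i => fmap T (gf i) (fmap T (gr i) c)).
Proof.
  transitivity (fmap T (idm X) c); [rewrite fmap_id; reflexivity|].
  rewrite (idm_J A B HB X). rewrite fmap_J. apply (J_ext (L:=PowSL _)). intros i _.
  rewrite fmap_comp. reflexivity.
Qed.

Definition Fext (A : SlCat) (B : ob A -> Prop) (T T' : SlFun A) (L : SupLattice)
  (lam : forall X : ob A, Pow (fob T X) -> Pow (fob T' X) -> L) X
  (c : Pow (fob T X)) (y' : Pow (fob T' X)) : L :=
  J (Pg A B X) (fun i => lam (gC i) (fmap T (gr i) c) (dual (fmap T' (gf i)) y')).

Lemma expand (A : SlCat) (B : ob A -> Prop) (HB : sl_generating B) (T T' : SlFun A)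
  (L : SupLattice) (e : forall X : ob A, Pow (fob T X) -> Pow (fob T' X) -> L) X :
  (forall y', is_linear (L:=PowSL (fob T X)) (M:=L) (fun a => e X a y')) ->
  (forall i, Pg A B X i -> forall c y',
      e (gC i) c (dual (fmap T' (gf i)) y') = e X (fmap T (gf i) c) y') ->
  forall c y', e X c y' = Fext A B T T' L e X c y'.
Proof.
  intros Hlin Hcone c y'.
  rewrite (ident_T A B HB T X c) at 1.
  pose proof (lin_J (L:=PowSL (fob T X)) (fun a => e X a y') (Pg A B X)
     (fun i => fmap T (gf i) (fmap T (gr i) c)) (Hlin y')) as H.
  cbv beta in H. rewrite H.
  unfold Fext. apply J_ext. intros i Hi. symmetry. apply Hcone; auto.
Qed.

Theorem mainTheorem18 (A : SlCat) (B : ob A -> Prop) (T T' : SlFun A)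
  (L : SupLattice)
  (lam : forall X : ob A, Pow (fob T X) -> Pow (fob T' X) -> L) :
  sl_generating B ->
  tensor_arrows T T' L B lam ->
  diamond_cone T T' L B lam ->
  exists ext : forall X : ob A, Pow (fob T X) -> Pow (fob T' X) -> L,
    (tensor_arrows T T' L (fun _ => True) ext /\
     diamond_cone T T' L (fun _ => True) ext /\
     (forall C, B C -> ext C = lam C)) /\
    (forall ext' : forall X : ob A, Pow (fob T X) -> Pow (fob T' X) -> L,
       tensor_arrows T T' L (fun _ => True) ext' ->
       diamond_cone T T' L (fun _ => True) ext' ->
       (forall C, B C -> ext' C = lam C) ->
       forall X, ext' X = ext X).
Proof.
  intros HB Hbim Hcone.
  exists (Fext A B T T' L lam). split; [split; [|split]|].
  -
    intros X _. split.
    + intros y' S. rewrite sl_join_J. unfold Fext.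
      rewrite (J_ext _ _ (fun i => J S (fun a =>
         lam (gC i) (fmap T (gr i) a) (dual (fmap T' (gf i)) y')))).
      * apply J_swap.
      * intros i [HC _].
        rewrite (lin_J (L:=PowSL _) (M:=PowSL _) (fmap T (gr i)) S (fun x => x)
                   (fmap_linear _ )).
        rewrite (lin_J (L:=PowSL _) (fun a => lam (gC i) a (dual (fmap T' (gf i)) y')) S _
                   (proj1 (Hbim _ HC) _)).
        reflexivity.
    + intros c S. rewrite sl_join_J. unfold Fext.
      rewrite (J_ext _ _ (fun i => J S (fun a =>
         lam (gC i) (fmap T (gr i) c) (dual (fmap T' (gf i)) a)))).
      * apply J_swap.
      * intros i [HC _].
        rewrite (lin_J (L:=PowSL _) (M:=PowSL _) (dual (fmap T' (gf i))) S (fun x => x)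
                   (dual_linear _ _ _)).
        rewrite (lin_J (L:=PowSL _) (lam (gC i) (fmap T (gr i) c)) S _
                   (proj2 (Hbim _ HC) _)).
        reflexivity.
  -
    intros X Y h _ _ c y'.
    transitivity (J (Pg A B X) (fun i => J (Pg A B Y) (fun j =>
       lam (gC j) (fmap T (comp (gr j) (comp h (gf i))) (fmap T (gr i) c))
           (dual (fmap T' (gf j)) y')))).
    + unfold Fext. apply J_ext. intros i [HCi _].
      rewrite <- dual_comp'.
      replace (comp h (gf i)) with (comp (idm Y) (comp h (gf i))) at 1
        by apply comp_id_l.
      rewrite (idm_J A B HB Y). rewrite comp_J_l. rewrite dual_fmap_J.
      rewrite (lin_J (L:=PowSL _) (lam (gC i) (fmap T (gr i) c)) _ _ (proj2 (Hbim _ HCi) _)).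
      apply J_ext. intros j [HCj _].
      rewrite <- comp_assoc. rewrite dual_comp'.
      apply Hcone; auto.
    + rewrite J_swap. unfold Fext. apply J_ext. intros j [HCj _].
      rewrite (ident_T A B HB T X c) at 1.
      rewrite (lin_J (L:=PowSL _) (M:=PowSL _) (fmap T h) _ _ (fmap_linear _ )).
      rewrite (lin_J (L:=PowSL _) (M:=PowSL _) (fmap T (gr j)) _ _ (fmap_linear _ )).
      rewrite (lin_J (L:=PowSL _) (fun a => lam (gC j) a (dual (fmap T' (gf j)) y')) _ _
                 (proj1 (Hbim _ HCj) _)).
      apply J_ext. intros i _.
      rewrite !fmap_comp. reflexivity.
  -
    intros C HC. apply functional_extensionality; intro c.
    apply functional_extensionality; intro y'.
    symmetry. apply (expand A B HB T T' L lam C).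
    + intro y'0. exact (proj1 (Hbim C HC) y'0).
    + intros i [HD _] c0 y0. apply Hcone; auto.
  -
    intros ext' Hb' Hc' Hl' X.
    apply functional_extensionality; intro c.
    apply functional_extensionality; intro y'.
    rewrite (expand A B HB T T' L ext' X).
    + unfold Fext. apply J_ext. intros i [HC _]. rewrite (Hl' _ HC). reflexivity.
    + intro y0. exact (proj1 (Hb' X I) y0).
    + intros i _ c0 y0. apply Hc'; auto.
Qed.
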